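(* Let $\Gamma$ be a connected $k$-regular highly-regular graph with CAM $C=[c_{i,j}]_{1\le i,j\le m}$ and diameter $D=\operatorname{diam}(\Gamma)\ge1$, with chosen partitions $V_1(u)=\{u\},\dots,V_m(u)$ for each vertex $u$. Let $S_0,\dots,S_D$ be nonempty subsets of $\{1,\dots,m\}$ such that $D_i(u)=\bigsqcup_{t\in S_i}V_t(u)$ for every vertex $u$ and every $i$ (such subsets always exist). For $i\in\{1,\dots,D\}$ define $b_{i-1}^{\max}=\max\{\sum_{t\in S_i}c_{t,l}: l\in S_{i-1}\}$ and $c_i^{\min}=\min\{\sum_{t\in S_{i-1}}c_{t,l}: l\in S_i\}$. Then (1) $k=b_0^{\max}\ge b_1^{\max}\ge\cdots\ge b_{D-1}^{\max}\ge1$; (2) $1=c_1^{\min}\le c_2^{\min}\le\cdots\le c_D^{\min}\le k$.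
   Context: All graphs are finite, simple; $d(u,v)$ is graph distance and $D_i(u)=\{v:d(u,v)=i\}$. A graph $\Gamma$ of order $n$ is highly-regular with collapsed adjacency matrix (CAM) $C=[c_{i,j}]_{1\le i,j\le m}$, where $2\le m<n$ (the value $m=n$ is allowed only when $n=2$), if for every vertex $u$ there is a partition of $V(\Gamma)$ into nonempty sets $V_1(u)=\{u\},V_2(u),\dots,V_m(u)$ such that for all $i,j$, every vertex $y\in V_j(u)$ is adjacent to exactly $c_{i,j}$ vertices of $V_i(u)$. *)

(* Defs.v *)
From mathcomp Require Import all_boot.
Set Implicit Arguments. Unset Strict Implicit. Unset Printing Implicit Defensive.

Section Graphs.
Variable T : finType.

Definition simple_graph (e : rel T) : Prop :=
  symmetric e /\ irreflexive e.

(* reach e n u v : there is a walk of length at most n from u to v,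
   i.e. d(u,v) <= n. *)
Fixpoint reach (e : rel T) (n : nat) (u v : T) : bool :=
  match n with
  | 0 => u == v
  | n'.+1 => reach e n' u v || [exists w, reach e n' u w && e w v]
  end.

(* v \in D_i(u), i.e. d(u,v) = i. *)
Definition distD (e : rel T) (i : nat) (u v : T) : bool :=
  reach e i u v && (if i is j.+1 then ~~ reach e j u v else true).

Definition connected_graph (e : rel T) : Prop :=
  forall u v : T, connect e u v.

Definition k_regular (e : rel T) (k : nat) : Prop :=
  forall u : T, #|[set v | e u v]| = k.

Definition is_diameter (e : rel T) (D : nat) : Prop :=
  (forall u v : T, reach e D u v) /\ (exists u v : T, distD e D u v).

(* Highly-regular with CAM c (indices 1..m of the paper are the ordinals
   0..m-1 here) and chosen partitions: P u v = t  means  v \in V_{t+1}(u). *)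
Definition highly_regular_with (e : rel T) (m : nat)
    (c : 'I_m -> 'I_m -> nat) (P : T -> T -> 'I_m) : Prop :=
  [/\ (2 <= m < #|T|) \/ (m = 2 /\ #|T| = 2),
      (forall u v : T, (nat_of_ord (P u v) == 0) = (v == u)),
      (forall (u : T) (t : 'I_m), exists v : T, P u v = t) &
      (forall (u y : T) (i : 'I_m),
          #|[set x | e x y && (P u x == i)]| = c i (P u y))].

Definition bmax m (c : 'I_m -> 'I_m -> nat) (S : nat -> {set 'I_m}) (j : nat) : nat :=
  \max_(l in S j) \sum_(t in S j.+1) c t l.

(* c_i^min = min { sum_{t in S_{i-1}} c_{t,l} : l in S_i }  (minimum over a
   set; the unit of the fold is the maximum, which is >= every member, so for
   nonempty S_i this is exactly the minimum). *)
Definition cmin m (c : 'I_m -> 'I_m -> nat) (S : nat -> {set 'I_m}) (i : nat) : nat :=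
  \big[minn/ \max_(l in S i) \sum_(t in S i.-1) c t l]_(l in S i)
     \sum_(t in S i.-1) c t l.

End Graphs.

(* Main.v *)
Require Import Defs.
From mathcomp Require Import all_boot zify.
Set Implicit Arguments. Unset Strict Implicit.

Section R.
Variables (T : finType) (e : rel T).
Hypothesis esym : symmetric e.

Lemma reachS n u v : reach e n u v -> reach e n.+1 u v.
Proof. by move=> h /=; rewrite h. Qed.

Lemma reach_mono n m u v : n <= m -> reach e n u v -> reach e m u v.
Proof.
move=> /subnK <-; elim: (m - n) => [|k IH] //= h.
by rewrite IH.
Qed.

Lemma reach_step n u x y : reach e n u x -> e x y -> reach e n.+1 u y.
Proof. move=> h1 h2 /=; apply/orP; right; apply/existsP; exists x; by rewrite h1. Qed.

Lemma reach_front n u v : reach e n.+1 u v <->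
  reach e n u v \/ exists w, e u w /\ reach e n w v.
Proof.
elim: n u v => [|n IH] u v.
  split => /=.
    case/orP=> [->|/existsP [w /andP [/eqP <- h]]]; first by left.
    by right; exists v; rewrite h eqxx.
  case=> [->//|[w [h /eqP <-]]]; apply/orP; right; apply/existsP; exists u.
  by rewrite eqxx h.
split.
  rewrite {1}/reach -/(reach e n.+1) => /orP [h|/existsP [w /andP [h1 h2]]].
    by left.
  case/IH: h1 => [h1|[w' [h3 h4]]].
    by left; apply: reach_step h1 h2.
  by right; exists w'; split => //; apply: reach_step h4 h2.
case=> [h|[w [h1 h2]]]; first exact: reachS.
move: h2; rewrite {1}/reach -/(reach e n) => /orP [h|/existsP [z /andP [h3 h4]]].
  by apply: reachS; apply/IH; right; exists w.
apply: (@reach_step n.+1 u z) => //; apply/IH; right; by exists w.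
Qed.

Lemma reach_sym n u v : reach e n u v = reach e n v u.
Proof.
elim: n u v => [|n IH] u v; first by rewrite /= eq_sym.
apply/idP/idP.
  move/reach_front=> [h|[w [h1 h2]]]; first by apply: reachS; rewrite -IH.
  apply: (@reach_step n v w); first by rewrite -IH. by rewrite esym.
move/reach_front=> [h|[w [h1 h2]]]; first by apply: reachS; rewrite IH.
apply: (@reach_step n u w); first by rewrite IH. by rewrite esym.
Qed.

Lemma distD_sym i u v : distD e i u v = distD e i v u.
Proof. rewrite /distD (reach_sym i u v); case: i => [|i] //=; by rewrite (reach_sym i u v). Qed.

Lemma dist_exists n u v : reach e n u v -> exists2 i, i <= n & distD e i u v.
Proof.
elim: n => [|n IH] h; first by exists 0; rewrite // /distD h.
case h': (reach e n u v); first by case: (IH h') => i hi hd; exists i => //; lia.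
by exists n.+1 => //; rewrite /distD h h'.
Qed.

Lemma dist_adj a b z p q : e a b -> distD e p z a -> distD e q z b -> q <= p.+1.
Proof.
move=> hab /andP [hp _] /andP [_ hq].
case: q hq => [|q] hq; first by [].
rewrite leqNgt; apply/negP => hlt.
move/negP: hq; apply; apply: reach_mono (reach_step hp hab); lia.
Qed.

Lemma geodesic i u v : distD e i.+1 u v -> exists w, distD e i u w /\ e w v.
Proof.
rewrite /distD.
case/andP=> h hn.
move: h; rewrite [reach _ i.+1 _ _]/= (negbTE hn) /= => h.
case/existsP: h => w /andP [h1 h2].
exists w; split => //; rewrite h1 /=.
case: i h1 hn => [//|i] h1 hn.
apply/negP => h3; move/negP: hn; apply; exact: reach_step h3 h2.
Qed.

End R.

Lemma sum_card_part (I J : finType) (p : pred I) (f : I -> J) (A : {set J}) :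
  \sum_(t in A) #|[set x | p x && (f x == t)]| = #|[set x | p x && (f x \in A)]|.
Proof.
rewrite -sum1_card (partition_big f (mem A)) /=; last by move=> x; rewrite inE => /andP [].
apply: eq_bigr => t ht; rewrite -sum1_card; apply: eq_bigl => x; rewrite !inE.
by case: eqP => [->|]; rewrite ?andbT ?andbF // ht andbT.
Qed.

Lemma bigmin_le (I : finType) (A : {set I}) (G : I -> nat) M l0 :
  l0 \in A -> \big[minn/M]_(l in A) G l <= G l0.
Proof.
move=> h; have: l0 \in index_enum I by rewrite mem_index_enum.
elim: (index_enum I) => [|x r IH] //; rewrite big_cons inE => /orP [/eqP <-|hr].
  by rewrite h geq_minl.
case: (x \in A); last exact: IH.
by rewrite geq_min IH ?orbT.
Qed.

Lemma bigmin_le' (I : finType) (A : {set I}) (G : I -> nat) M l0 n :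
  l0 \in A -> G l0 <= n -> \big[minn/M]_(l in A) G l <= n.
Proof. by move=> h1 h2; apply: leq_trans _ h2; exact: bigmin_le. Qed.

Lemma bigmin_ge (I : finType) (A : {set I}) (G : I -> nat) M c0 :
  c0 <= M -> (forall l, l \in A -> c0 <= G l) -> c0 <= \big[minn/M]_(l in A) G l.
Proof.
move=> hM h; apply: (big_ind (fun x => c0 <= x)) => //.
  by move=> x y hx hy; rewrite leq_min hx hy.
Qed.

Theorem proposition6p1 (T : finType) (e : rel T) (k m D : nat)
    (c : 'I_m -> 'I_m -> nat) (P : T -> T -> 'I_m) (S : nat -> {set 'I_m}) :
  simple_graph e ->
  connected_graph e ->
  k_regular e k ->
  highly_regular_with e c P ->
  is_diameter e D ->
  1 <= D ->
  (forall i, i <= D -> S i != set0) ->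
  (forall i (u v : T), i <= D -> distD e i u v = (P u v \in S i)) ->
  ((bmax c S 0 = k /\
    (forall j, j.+1 < D -> bmax c S j.+1 <= bmax c S j) /\
    1 <= bmax c S D.-1)
   /\
   (cmin c S 1 = 1 /\
    (forall i, 1 <= i -> i < D -> cmin c S i <= cmin c S i.+1) /\
    cmin c S D <= k)).
Proof.
move=> [esym eirr] _ Hk [_ HP0 HPs Hc] [Hreach [u0 [v0 Huv]]] HD HS HSd.
have sumK : forall u y i, i <= D ->
    \sum_(t in S i) c t (P u y) = #|[set x | e x y && distD e i u x]|.
  move=> u y i hi.
  rewrite (eq_bigr (fun t => #|[set x | e x y && (P u x == t)]|)); last by move=> t _; rewrite Hc.
  rewrite sum_card_part; apply: eq_card => x; rewrite !inE (HSd i u x hi) //.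
have realize : forall i u l, i <= D -> l \in S i -> exists y, P u y = l /\ distD e i u y.
  move=> i u l hi hl; case: (HPs u l) => y hy; exists y; split => //; by rewrite HSd // hy.
have dist1 : forall u x, distD e 1 u x = e u x.
  move=> u x; rewrite /distD /=.
  case: eqP => [->|ne] /=; first by rewrite eirr.
  rewrite andbT; apply/existsP/idP => [[w /andP [/eqP <- h]]|h] //; by exists u; rewrite eqxx.
have anyd : forall u v, exists2 i, i <= D & distD e i u v.
  move=> u v; exact: dist_exists (Hreach u v).
have card_le_k : forall y (p : pred T), #|[set x | e x y && p x]| <= k.
  move=> y p; rewrite -(Hk y); apply: subset_leq_card; apply/subsetP => x.
  by rewrite !inE (esym x y) => /andP [].
have nonempty : forall i, i <= D -> exists l, l \in S i.
  by move=> i hi; case/set0Pn: (HS i hi) => l hl; exists l.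
split; split.
- apply/eqP; rewrite eqn_leq; apply/andP; split.
    apply/bigmax_leqP => l hl.
    case: (realize 0 u0 l (leq0n _) hl) => y [<- hy].
    rewrite sumK //; exact: card_le_k.
  case: (nonempty 0 (leq0n _)) => l hl.
  apply: leq_trans (leq_bigmax_cond _ hl).
  case: (realize 0 u0 l (leq0n _) hl) => y [<- hy].
  have ey : u0 = y by move: hy; rewrite /distD /= andbT => /eqP.
  rewrite -ey sumK // -(Hk u0); apply: subset_leq_card; apply/subsetP=> x.
  by rewrite !inE dist1 (esym x u0) => ->.
split.
- move=> j hj; apply/bigmax_leqP => l hl.
  case: (realize j.+1 u0 l (ltnW hj) hl) => y [<- hy].
  rewrite (distD_sym esym) in hy.
  case: (geodesic hy) => w [hyw hwu].
  rewrite sumK; last exact: hj.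
  apply: (@leq_trans #|[set x | e x y && distD e j.+1 w x]|).
    apply: subset_leq_card; apply/subsetP => x; rewrite !inE => /andP [hxy hx]; rewrite hxy /=.
    case: (anyd w x) => d _ hd'.
    have h1 : j.+2 <= d.+1.
      apply: (@dist_adj T e w u0 x d j.+2 hwu); by rewrite (distD_sym esym).
    have h2 : d <= j.+1.
      apply: (@dist_adj T e y x w j d); [by rewrite (esym y x) | by rewrite (distD_sym esym) | exact: hd'].
    by have -> : j.+1 = d by apply/eqP; rewrite eqn_leq h2 -ltnS h1.
  rewrite -sumK; last exact: ltnW hj.
  apply: leq_bigmax_cond; rewrite -HSd; [by rewrite (distD_sym esym) | exact: ltnW (ltnW hj)].
- have Huv' : distD e D.-1.+1 u0 v0 by rewrite prednK.
  case: (geodesic Huv') => w [hw hwv].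
  rewrite /bmax.
  have hPw : P u0 w \in S D.-1 by rewrite -HSd //; exact: leq_pred.
  apply: leq_trans (leq_bigmax_cond _ hPw).
  rewrite sumK; last by rewrite prednK.
  apply/card_gt0P; exists v0; by rewrite inE (esym v0 w) hwv Huv'.
- have val1 : forall l, l \in S 1 -> \sum_(t in S 0) c t l = 1.
    move=> l hl; case: (realize 1 u0 l HD hl) => y [<- hy].
    rewrite sumK // (_ : [set x | e x y && distD e 0 u0 x] = [set u0]) ?cards1 //.
    apply/setP => x; rewrite !inE /distD /= andbT eq_sym.
    case: eqP => [->|] /=; last by rewrite andbF.
    by rewrite andbT -dist1.
  case: (nonempty 1 HD) => l1 hl1.
  apply/eqP; rewrite eqn_leq; apply/andP; split.
    rewrite /cmin; apply: (@bigmin_le' _ (S 1) (fun l => \sum_(t in S 1.-1) c t l) _ l1 1 hl1).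
    exact: eq_leq (val1 l1 hl1).
  rewrite /cmin; apply: (@bigmin_ge _ (S 1) (fun l => \sum_(t in S 1.-1) c t l)).
    by apply: leq_trans (leq_bigmax_cond _ hl1); rewrite (val1 l1 hl1).
  by move=> l hl; rewrite (val1 l hl).
split.
- move=> i hi1 hiD.
  have main : forall l, l \in S i.+1 -> cmin c S i <= \sum_(t in S i) c t l.
    move=> l hl.
    case: (realize i.+1 u0 l hiD hl) => y [<- hy].
    rewrite (distD_sym esym) in hy.
    case: (geodesic hy) => w [hyw hwu].
    have hPw : P w y \in S i by rewrite -HSd; [rewrite (distD_sym esym) | exact: ltnW hiD].
    apply: (@bigmin_le' _ (S i) (fun l => \sum_(t in S i.-1) c t l) _ (P w y) _ hPw); cbv beta.
    have hi' : i <= D by exact: ltnW hiD.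
    have hi'' : i.-1 <= D by exact: leq_trans (leq_pred i) hi'.
    rewrite !sumK //.
    apply: subset_leq_card; apply/subsetP => x; rewrite !inE => /andP [hxy hx]; rewrite hxy /=.
    case: (anyd u0 x) => d _ hd'.
    have h1 : d <= i.-1.+1.
      apply: (@dist_adj T e w u0 x i.-1 d hwu); by rewrite (distD_sym esym).
    have h2 : i.+1 <= d.+1.
      apply: (@dist_adj T e x y u0 d i.+1 hxy) => //; by rewrite (distD_sym esym).
    by have -> : i = d by apply/eqP; rewrite eqn_leq; apply/andP; split; [rewrite -ltnS | rewrite -(prednK hi1)].
  rewrite {2}/cmin; apply: (@bigmin_ge _ (S i.+1) (fun l => \sum_(t in S i.+1.-1) c t l)) => //.
  case: (nonempty i.+1 hiD) => l hl.
  apply: leq_trans (main l hl) (leq_bigmax_cond _ hl).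
- case: (nonempty D (leqnn _)) => l hl.
  rewrite /cmin; apply: (@bigmin_le' _ (S D) (fun l => \sum_(t in S D.-1) c t l) _ l _ hl); cbv beta.
  case: (realize D u0 l (leqnn _) hl) => y [<- hy].
  rewrite sumK; last exact: leq_pred.
  exact: card_le_k.
Qed.
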